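(* For $m\ge1$ let $G_m=P_{4m} \times P_{3m}$. Then $\dim_{1,f}(G_m)=\Theta(m^2)$ as $m\to\infty$.
   Context: $P_n$ is the path on $n$ vertices and $\times$ denotes the Cartesian product, so $P_s\times P_t$ is the $s\times t$ grid graph. $d(x,y)$ is the distance in $G$. $d_1(x,y)=\min\{d(x,y),2\}$ and $R_1\{x,y\}=\{z\in V(G): d_1(x,z)\neq d_1(y,z)\}$. For a function $g$ on $V(G)$ and $U\subseteq V(G)$, $g(U)=\sum_{s\in U}g(s)$. A function $h:V(G)\to[0,1]$ is a $1$-truncated resolving function of $G$ if $h(R_1\{x,y\})\ge 1$ for all distinct $x,y\in V(G)$; $\dim_{1,f}(G)$ is the minimum of $h(V(G))$ over all such $h$. $f=\Theta(g)$ means there are positive constants $c_1,c_2,N$ with $c_1|g(m)|\le|f(m)|\le c_2|g(m)|$ for all $m>N$. *)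

(* Defs.v *)
From HB Require Import structures.
From mathcomp Require Import all_boot all_order all_algebra.
From mathcomp Require Import classical_sets reals.
Set Implicit Arguments. Unset Strict Implicit. Unset Printing Implicit Defensive.
Import Order.TTheory GRing.Theory Num.Theory.

Section Graphs.
Variable T : finType.
Variable e : rel T.

Definition walk_n (n : nat) (x y : T) : bool :=
  [exists p : n.-tuple T, path e x p && (last x p == y)].

(* graph distance: least n with a walk of length n (any shortest path in a
   connected graph has fewer than #|T| edges); #|T| if unreachable. *)
Definition gdist (x y : T) : nat := find (fun n => walk_n n x y) (iota 0 #|T|).

Definition dist1 (x y : T) : nat := minn (gdist x y) 2.

Definition R1 (x y : T) : {set T} := [set z | dist1 x z != dist1 y z].

Local Open Scope ring_scope.

Definition truncated_resolving_fun (R : realType) (h : T -> R) : Prop :=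
  (forall v, 0 <= h v <= 1) /\
  (forall x y, x != y -> 1 <= \sum_(z in R1 x y) h z).

(* dim_{1,f}(G): the minimum (= infimum) of h(V(G)) over 1-truncated
   resolving functions h *)
Definition frac_trunc_metric_dim (R : realType) : R :=
  inf [set (\sum_(v : T) h v) | h in [set h : T -> R | truncated_resolving_fun h]]%classic.

End Graphs.

Definition path_rel (n : nat) : rel 'I_n :=
  fun i j => (i.+1 == j :> nat) || (j.+1 == i :> nat).

Definition cart_rel (A B : finType) (eA : rel A) (eB : rel B) : rel (A * B) :=
  fun u v => ((u.1 == v.1) && eB u.2 v.2) || (eA u.1 v.1 && (u.2 == v.2)).

Definition grid_rel (s t : nat) : rel ('I_s * 'I_t) :=
  cart_rel (@path_rel s) (@path_rel t).

(* Main.v *)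
Require Import Defs.
From HB Require Import structures.
From mathcomp Require Import all_boot all_order all_algebra.
From mathcomp Require Import classical_sets reals.
From mathcomp Require Import zify.
Import Order.TTheory GRing.Theory Num.Theory.
Local Open Scope ring_scope.

Section Gen.
Variables (T : finType) (e : rel T).

Lemma gdist_walk (x z : T) : (gdist e x z < #|T|)%N -> walk_n e (gdist e x z) x z.
Proof.
move=> H; have Hh : has (fun n => walk_n e n x z) (iota 0 #|T|).
  by rewrite has_find size_iota.
have := nth_find 0 Hh; rewrite nth_iota //.
Qed.

Lemma walk0 (x z : T) : walk_n e 0 x z -> x = z.
Proof.
by case/existsP => p /andP [_ /eqP]; rewrite (tuple0 p).
Qed.

Lemma walk1 (x z : T) : walk_n e 1 x z -> e x z.
Proof.
case/existsP => p; case: p => s; case: s => [|a [|b s]] //= _.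
by rewrite andbT => /andP [ha /eqP <-].
Qed.

Lemma near1 (x z : T) : (1 < #|T|)%N -> (dist1 e x z < 2)%N -> x = z \/ e x z.
Proof.
rewrite /dist1 => HT Hd.
have Hg : (gdist e x z <= 1)%N by move: Hd; lia.
have := gdist_walk x z (leq_ltn_trans Hg HT).
move: Hg; case: (gdist e x z) => [|[|k]] //= _.
  by move/walk0; left.
by move/walk1; right.
Qed.

Lemma R1_near (x y z : T) : z \in R1 e x y ->
  (dist1 e x z < 2)%N || (dist1 e y z < 2)%N.
Proof.
rewrite inE /dist1; apply: contraR; rewrite negb_or -!leqNgt => /andP [h1 h2].
apply/negPn/eqP.
have a1 := geq_minr (gdist e x z) 2; have a2 := geq_minr (gdist e y z) 2.
lia.
Qed.

Lemma gdist_self (x : T) : gdist e x x = 0%N.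
Proof.
rewrite /gdist; case: #|T| => [|n] //=.
have -> : walk_n e 0 x x by apply/existsP; exists [tuple]; rewrite /= eqxx.
by [].
Qed.

Lemma gdist_neq0 (x y : T) : x != y -> gdist e x y <> 0%N.
Proof.
move=> Hxy H0.
have HT : (0 < #|T|)%N by apply/card_gt0P; exists x.
have := gdist_walk x y; rewrite H0 => /(_ HT) /walk0 Hxy'.
by rewrite Hxy' eqxx in Hxy.
Qed.

End Gen.
Arguments gdist_walk {T e}.
Arguments walk0 {T e}.
Arguments walk1 {T e}.
Arguments near1 {T e x z}.
Arguments R1_near {T e x y z}.
Arguments gdist_self {T e}.
Arguments gdist_neq0 {T e x y}.

Ltac nlia := unfold Finite.sort in *; simpl in *; lia.

Section Grid.
Variable m : nat.
Local Notation T := ('I_(4 * m) * 'I_(3 * m))%type.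

Lemma blk1P (a : 'I_(4 * m)) : (a %/ 4 < m)%N.
Proof. have := ltn_ord a; lia. Qed.
Lemma blk2P (a : 'I_(3 * m)) : (a %/ 3 < m)%N.
Proof. have := ltn_ord a; lia. Qed.

Definition blk (z : T) : 'I_m * 'I_m := (Ordinal (blk1P z.1), Ordinal (blk2P z.2)).

Lemma block_lb (R : realType) (h : T -> R) : truncated_resolving_fun (@grid_rel (4 * m) (3 * m)) h ->
  forall b : 'I_m * 'I_m, 1 <= \sum_(z | blk z == b) h z.
Proof.
move=> [h01 hres] [i j].
have Hi := ltn_ord i; have Hj := ltn_ord j.
have hx1 : (4 * i + 1 < 4 * m)%N by lia.
have hy1 : (4 * i + 2 < 4 * m)%N by lia.
have hx2 : (3 * j + 1 < 3 * m)%N by lia.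
pose x : T := (Ordinal hx1, Ordinal hx2).
pose y : T := (Ordinal hy1, Ordinal hx2).
have Hxy : x != y.
  apply/negP => /eqP/(congr1 (fun p : T => val p.1)) /=; lia.
apply: (le_trans (hres x y Hxy)).
have HT : (1 < #|{: T}|)%N.
  rewrite card_prod !card_ord; nia.
rewrite (big_mkcond (fun z => z \in _)) [X in _ <= X](big_mkcond (fun z => blk z == _)).
apply: ler_sum => z _.
case: ifP => Hz; last first.
  by case: ifP => _ //; case/andP: (h01 z).
suff -> : blk z == (i, j) by [].
have key : forall w, (w = z \/ grid_rel w z) -> (4 * i + 1 <= w.1 <= 4 * i + 2)%N -> (w.2 : nat) = (3 * j + 1)%N ->
   blk z == (i, j).
  move=> w [<-|]; last move=> + hw1 hw2.
    move=> hw1 hw2.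
    apply/eqP; congr pair; apply/val_inj => /=; nlia.
  rewrite /grid_rel /cart_rel /path_rel /= => /orP [] /andP [] Ha Hb.
    have Ha' : (w.1 : nat) = z.1 by rewrite (eqP Ha).
    apply/eqP; congr pair; apply/val_inj => /=; first nlia.
    move: Hb => /orP [] /eqP; nlia.
  have Hb' : (w.2 : nat) = z.2 by rewrite (eqP Hb).
  apply/eqP; congr pair; apply/val_inj => /=; last nlia.
  move: Ha => /orP [] /eqP; nlia.
case/orP: (R1_near Hz) => /(near1 HT) H.
  by apply: (key x H) => //=; lia.
by apply: (key y H) => //=; lia.
Qed.
End Grid.

Lemma dim_bounds (R : realType) (m : nat) : (0 < m)%N ->
  (m%:R : R) ^+ 2 <= frac_trunc_metric_dim (@grid_rel (4 * m) (3 * m)) R /\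
  frac_trunc_metric_dim (@grid_rel (4 * m) (3 * m)) R <= 12 * (m%:R : R) ^+ 2.
Proof.
move=> Hm.
rewrite /frac_trunc_metric_dim.
set S := (X in inf X).
have one_res : truncated_resolving_fun (@grid_rel (4 * m) (3 * m)) (fun _ => (1 : R)).
  split; first by move=> v; rewrite lexx ler01.
  move=> x y Hxy; rewrite sumr_const.
  have : (0 < #|R1 (@grid_rel (4 * m) (3 * m)) x y|)%N.
    apply/card_gt0P; exists x; rewrite inE /dist1 gdist_self.
    have Hyx : y != x by rewrite eq_sym.
    have := gdist_neq0 (e := @grid_rel (4 * m) (3 * m)) Hyx.
    case: (gdist _ y x) => [|k] // _; lia.
  by move=> H; rewrite ler1n.
have Sne : S (\sum_(v : 'I_(4 * m) * 'I_(3 * m)) (fun _ => (1 : R)) v).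
  by exists (fun _ => 1).
have hlb : has_lbound S.
  exists 0 => _ [h [h01 _] <-]; apply: sumr_ge0 => i _; by case/andP: (h01 i).
split.
  apply: lb_le_inf; first by eexists; exact: Sne.
  move=> _ [h hres <-].
  rewrite (partition_big (@blk m) xpredT) //=.
  apply: (@le_trans _ _ (\sum_(b : 'I_m * 'I_m) (1 : R))).
    by rewrite sumr_const card_prod !card_ord -natrX -mulr_natr mul1r expnS expn1.
  by apply: ler_sum => b _; apply: block_lb.
apply: (le_trans (ge_inf hlb Sne)).
rewrite sumr_const card_prod !card_ord -mulr_natr mul1r -natrX -natrM.
rewrite ler_nat; nia.
Qed.

Theorem proposition3p8 (R : realType) :
  exists (c1 c2 : R) (N : nat), 0 < c1 /\ 0 < c2 /\
    forall m : nat, (N < m)%N ->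
      c1 * `|(m%:R : R) ^+ 2| <=
        `|frac_trunc_metric_dim (@grid_rel (4 * m) (3 * m)) R| /\
      `|frac_trunc_metric_dim (@grid_rel (4 * m) (3 * m)) R|
        <= c2 * `|(m%:R : R) ^+ 2|.
Proof.
exists 1, 12, 0%N; split => //; split => // m Hm.
have [lo up] := dim_bounds R m Hm.
have e2 : `|(m%:R : R) ^+ 2| = m%:R ^+ 2 by rewrite normrX normr_nat.
have e0 : 0 <= (m%:R : R) ^+ 2 by rewrite exprn_ge0.
rewrite e2 ger0_norm; last exact: le_trans lo.
by rewrite mul1r lo.
Qed.
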